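(* Let $\xi_1,\dots,\xi_S$ be finitely many scenarios, $\varepsilon\in(0,1)$, and let $g(\cdot,\xi_i):\mathbb{R}^n\to\mathbb{R}$ be Lipschitz continuous for all $i=1,\dots,S$. Then the quantile function $q$ is Lipschitz continuous. Moreover, if for some $\hat x$ the index $i(\hat x)$ is unique and $g(\cdot,\xi_{i(\hat x)})$ is differentiable around $\hat x$, then $q$ is differentiable at $\hat x$.
   Context: The quantile function is $q(x):=\inf\{t\mid \frac1S\sum_{i=1}^S\chi(g(x,\xi_i)\le t)\ge 1-\varepsilon\}$, where $\chi$ is the $0$-$1$ indicator function (i.e. the $(1-\varepsilon)$-quantile of $g(x,\xi)$ when $\xi$ is uniformly distributed on $\{\xi_1,\dots,\xi_S\}$). For every $x$ there is an index $i(x)\in\{1,\dots,S\}$ with $q(x)=g(x,\xi_{i(x)})$; ''$i(\hat x)$ is unique'' means that exactly one index $i$ satisfies $g(\hat x,\xi_i)=q(\hat x)$. *)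

(* Defs.v *)
From mathcomp Require Import all_boot all_order all_algebra.
From mathcomp Require Import all_classical all_reals all_analysis.
Set Implicit Arguments. Unset Strict Implicit. Unset Printing Implicit Defensive.
Import Order.TTheory GRing.Theory Num.Theory.
Import numFieldNormedType.Exports.
Local Open Scope classical_set_scope.
Local Open Scope ring_scope.

(* Scenario functions: g i = g(., xi_(i+1)), i : 'I_S.
   Empirical (1-eps)-quantile:
   q(x) = inf { t | (1/S) * #{ i | g i x <= t } >= 1 - eps }. *)
Definition quantile (R : realType) (n S : nat) (eps : R)
  (g : 'I_S -> 'rV[R]_n -> R) (x : 'rV[R]_n) : R :=
  inf [set t : R | 1 - eps <= (#|[set i : 'I_S | g i x <= t]|%:R / S%:R)].

(* Main.v *)
Require Import Defs.
From mathcomp Require Import all_boot all_order all_algebra.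
From mathcomp Require Import all_classical all_reals all_analysis.
From mathcomp Require Import lra.
Set Implicit Arguments. Unset Strict Implicit. Unset Printing Implicit Defensive.
Import Order.TTheory GRing.Theory Num.Theory.
Import numFieldNormedType.Exports.
Local Open Scope classical_set_scope.
Local Open Scope ring_scope.

Definition Aset (R : realType) (S : nat) (eps : R) (f : 'I_S -> R) :=
  [set t : R | 1 - eps <= (#|[set i : 'I_S | f i <= t]|%:R / S%:R)].

Lemma memE (T : Type) (P : T -> bool) j : (j \in [set i | P i]) = P j.
Proof. by apply/idP/idP; rewrite in_setE. Qed.

Lemma gap (R : realType) (S : nat) (P : pred 'I_S) (f : 'I_S -> R) (a : R) :
  (forall j, P j -> f j != a) ->
  exists2 d : R, 0 < d & forall j, P j -> d <= `|f j - a|.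
Proof.
move=> H; exists (\big[Order.min/1]_(j | P j) `|f j - a|).
  apply: lt_bigmin => // j Pj; rewrite normr_gt0 subr_eq0; exact: H.
by move=> j Pj; apply: bigmin_le_cond.
Qed.

Lemma count_eq (R : realType) (S : nat) (f : 'I_S -> R) (t1 t2 : R) :
  t1 <= t2 -> (forall j, ~ (t1 < f j /\ f j <= t2)) ->
  #|[set i | f i <= t1]| = #|[set i | f i <= t2]|.
Proof.
move=> le12 H; apply: eq_card => j; rewrite !memE.
case: (lerP (f j) t1) => h1; first by rewrite (le_trans h1 le12).
case: (lerP (f j) t2) => h2 //; exfalso; exact: (H j).
Qed.

Lemma count_le (R : realType) (S : nat) (f1 f2 : 'I_S -> R) (t1 t2 : R) :
  (forall j, f1 j <= t1 -> f2 j <= t2) ->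
  leq #|[set i | f1 i <= t1]| #|[set i | f2 i <= t2]|.
Proof.
move=> H; apply: subset_leq_card; apply/fintype.subsetP => j; rewrite !memE; exact: H.
Qed.

Section Q.
Variables (R : realType) (S : nat) (eps : R) (f : 'I_S -> R).
Hypotheses (S0 : (0 < S)%N) (e0 : 0 < eps) (e1 : eps < 1).

Let T : R := \sum_i `|f i|.

Lemma nle_T j : `|f j| <= T.
Proof.
rewrite /T (bigD1 j) //= lerDl; apply: sumr_ge0 => *; exact: normr_ge0.
Qed.

Lemma fle_T j : f j <= T.
Proof. exact: le_trans (ler_norm _) (nle_T j). Qed.

Lemma S_neq0 : (S%:R : R) != 0.
Proof. by rewrite pnatr_eq0 -lt0n. Qed.

Lemma A_T : Aset eps f T.
Proof.
rewrite /Aset /=.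
have -> : #|[set i | f i <= T]| = S.
  rewrite -[RHS]card_ord; apply: eq_card => j; rewrite memE fle_T //.
rewrite divff ?S_neq0 //; by rewrite gerBl ltW.
Qed.

Lemma A_lb : lbound (Aset eps f) (- T).
Proof.
move=> t; rewrite /Aset /=; apply: contraPP => /negP; rewrite -ltNge => tlt.
have -> : #|[set i | f i <= t]| = 0%N.
  apply: eq_card0 => j; rewrite memE; apply/negbTE; rewrite -ltNge.
  apply: lt_le_trans tlt _; rewrite lerNl.
  apply: le_trans (ler_norm _) _; rewrite normrN; exact: nle_T.
by rewrite mul0r; apply/negP; rewrite -ltNge subr_gt0 e1.
Qed.

Lemma A_hasinf : has_inf (Aset eps f).
Proof. split; [exists T; exact: A_T | exists (- T); exact: A_lb]. Qed.

Lemma A_below t : t < inf (Aset eps f) -> ~ Aset eps f t.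
Proof.
move=> tl At; have := ge_inf (A_hasinf.2) At; rewrite leNgt tl //.
Qed.

Lemma A_inf : Aset eps f (inf (Aset eps f)).
Proof.
set q := inf _.
have [d d0 Hd] := @gap R S (fun j => q < f j) f q (fun j h => negbT (gt_eqF h)).
have qd : q < q + d by rewrite ltrDl.
have [t At tlt] := inf_lt (A_hasinf.1) qd.
have qt : q <= t := ge_inf (A_hasinf.2) At.
rewrite /Aset /= (count_eq qt) //.
move=> j [h1 h2]; have := Hd j h1; rewrite ger0_norm; lra.
Qed.
End Q.

Lemma shift_le (R : realType) (S : nat) (eps : R) (f1 f2 : 'I_S -> R) (d : R) :
  (0 < S)%N -> 0 < eps -> eps < 1 ->
  (forall i, f2 i <= f1 i + d) ->
  inf (Aset eps f2) <= inf (Aset eps f1) + d.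
Proof.
move=> S0 e0 e1 H; rewrite -lerBlDr.
apply: lb_le_inf (A_hasinf f1 S0 e0 e1).1 _ => t At.
rewrite lerBlDr; apply: (ge_inf (A_hasinf f2 S0 e0 e1).2).
rewrite /Aset /=; apply: le_trans At _.
apply: ler_wpM2r; first by rewrite invr_ge0.
rewrite ler_nat; apply: count_le => j h.
by apply: le_trans (H j) _; rewrite lerD2r.
Qed.

Lemma near_eq_diff (R : realType) (V : normedModType R) (f g : V -> R) (x : V) :
  differentiable f x -> (\forall y \near x, f y = g y) -> differentiable g x.
Proof.
move=> df fg.
have gx : f x = g x := nbhs_singleton fg.
have H : g \o shift x = cst (g x) + 'd f x +o_ 0 id.
  apply/eqaddoP => e e0.
  have /eqaddoP := diff_locally df; move=> /(_ e e0).
  have : \forall h \near 0, f (h + x) = g (h + x).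
    by move: fg; rewrite (near_shift 0) subr0.
  move=> fgh fo; apply: filterS2 fgh fo => h E1.
  by rewrite !fctE /= E1 gx.
apply/diff_locallyP.
have -> : 'd g x = 'd f x :> (V -> R) by exact: (diff_unique (diff_continuous df) H).
by split => //; exact: diff_continuous.
Qed.

Unset Implicit Arguments.

Theorem lemmaA1 (R : realType) (n S : nat) (eps : R)
  (g : 'I_S -> 'rV[R]_n -> R) :
  (0 < S)%N -> 0 < eps -> eps < 1 ->
  (forall i, [lipschitz g i x | x in setT]) ->
  [lipschitz quantile eps g x | x in setT] /\
  (forall xhat : 'rV[R]_n,
     (exists! i, g i xhat = quantile eps g xhat) ->
     (forall i, g i xhat = quantile eps g xhat ->
        \forall x \near xhat, differentiable (g i) x) ->
     differentiable (quantile eps g) xhat).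
Proof.
move=> S0 e0 e1 Hlip.
have qE x : quantile eps g x = inf (Aset eps (fun i => g i x)) by [].
have Hall : \forall k \near +oo, forall i, k.-lipschitz (g i)  by apply: filter_forall; exact: Hlip.
have Hq : [lipschitz quantile eps g x | x in setT].
  rewrite /lipschitz_on; near=> k.
  have Hk : forall i, k.-lipschitz (g i) by near: k; exact: Hall.
  move=> [x y] _ /=.
  have Hi i : `|g i x - g i y| <= k * `|x - y| by exact: (Hk i (x, y)).
  have Hi1 i : g i x <= g i y + k * `|x - y|.
    by have := Hi i; rewrite ler_norml => /andP[h1 h2]; lra.
  have Hi2 i : g i y <= g i x + k * `|x - y|.
    by have := Hi i; rewrite ler_norml => /andP[h1 h2]; lra.
  have A1 := shift_le S0 e0 e1 Hi1.
  have A2 := shift_le S0 e0 e1 Hi2.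
  rewrite !qE ler_norml; apply/andP; split; lra.
split => //.
move=> xhat [i0 [Hi0 Huniq]] Hd.
have [k k0 [Hk Hkq]] := pinfty_ex_gt0 (filterI Hall Hq).
have Hne : forall j, j != i0 -> g j xhat != quantile eps g xhat.
  by move=> j jn; apply/eqP => E; move: jn; rewrite (Huniq j E) eqxx.
have [d d0 Hd'] := @gap R S (fun j => j != i0) (fun j => g j xhat) _ Hne.
have dg := Hd i0 Hi0.
apply: (near_eq_diff (nbhs_singleton dg)).
have Hn : \forall x \near xhat, `|x - xhat| < d / 4 / k.
  apply: (@cvgr_distC_lt _ _ _ (nbhs xhat) _ id xhat cvg_id).
  by rewrite !divr_gt0.
near=> x.
have hx : `|x - xhat| < d / 4 / k by near: x; exact: Hn.
have bnd (h : 'rV[R]_n -> R) : k.-lipschitz h -> `|h x - h xhat| < d / 4.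
  move=> Hh; apply: le_lt_trans (Hh (x, xhat) _) _ => //=.
  have : k * `|x - xhat| < k * (d / 4 / k) by rewrite ltr_pM2l.
  by rewrite [k * (d / 4 / k)]mulrC divfK ?gt_eqF.
have := bnd _ (Hk i0); rewrite ltr_norml Hi0 => /andP[a1 a2].
have := bnd _ Hkq; rewrite ltr_norml => /andP[b1 b2].
have far j : j != i0 ->
    quantile eps g xhat + 3 * d / 4 < g j x \/ g j x < quantile eps g xhat - 3 * d / 4.
  move=> jn; have := Hd' j jn; have := bnd _ (Hk j).
  rewrite ltr_norml ler_normr => /andP[h1 h2] /orP[h3|h3]; [left|right]; lra.
have qE' : quantile eps g x = inf (Aset eps (fun i => g i x)) by [].
case: (ltgtP (g i0 x) (quantile eps g x)) => [ab|ba|//].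
- exfalso; apply: (@A_below R S eps (fun i => g i x) S0 e0 e1 (g i0 x) ab).
  rewrite /Aset /= (@count_eq _ _ _ _ (quantile eps g x) (ltW ab)).
    exact: (@A_inf R S eps (fun i => g i x) S0 e0 e1).
  move=> j [h1 h2]; case: (eqVneq j i0) => [E|jn].
    by move: h1; rewrite E ltxx.
  by have := far j jn; lra.
- exfalso.
  have tb : quantile eps g x - d / 4 < quantile eps g x by lra.
  apply: (@A_below R S eps (fun i => g i x) S0 e0 e1 _ tb).
  rewrite /Aset /= (@count_eq _ _ _ _ (quantile eps g x) (ltW tb)).
    exact: (@A_inf R S eps (fun i => g i x) S0 e0 e1).
  move=> j [h1 h2]; case: (eqVneq j i0) => [E|jn].
    by move: h2; rewrite E; lra.
  by have := far j jn; lra.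
Unshelve. all: by end_near. Qed.
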